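(* Let $Q=(q_1,\dots,q_n)$ with $q_i\in\mathbb C\setminus\{0,1\}$ and $\Lambda=(\lambda_{ij})$ an $n\times n$ matrix over $\mathbb C\setminus\{0\}$ with $\lambda_{ii}=1$, $\lambda_{ij}=\lambda_{ji}^{-1}$, such that the group $G(Q,\Lambda)\subseteq\mathbb C^\times$ generated by all $q_i,\lambda_{ij}$ is torsion free; let $\eta_1,\dots,\eta_r$ be a basis of it, $\{\mu_1,\dots,\mu_r\}\subset\mathbb C$ a $\mathbb Q$-linearly independent set, and $d:G(Q,\Lambda)\to\mathbb C$ the homomorphism $d(\eta_1^{s_1}\cdots\eta_r^{s_r})=\sum_i s_i\mu_i$. Let $A_q$ be the $\mathbb C$-algebra generated by $y_1,x_1,\dots,y_n,x_n$ with relations, for $i<j$: $y_jy_i=\lambda_{ji}y_iy_j$, $y_jx_i=\lambda_{ij}x_iy_j$, $x_jy_i=q_i\lambda_{ij}y_ix_j$, $x_jx_i=q_i^{-1}\lambda_{ij}^{-1}x_ix_j$, and for all $i$: $x_iy_i-q_iy_ix_i=(q_i-1)(1+\sum_{k<i}y_kx_k)$. Let $A_1$ be the Poisson algebra $\mathbb C[y_1,x_1,\dots,y_n,x_n]$ with bracket, for $i<j$: $\{y_j,y_i\}=d(\lambda_{ji})y_iy_j$, $\{y_j,x_i\}=d(\lambda_{ij})x_iy_j$, $\{x_j,y_i\}=(d(q_i)+d(\lambda_{ij}))y_ix_j$, $\{x_j,x_i\}=-(d(q_i)+d(\lambda_{ij}))x_ix_j$, and for all $i$: $\{x_i,y_i\}=d(q_i)(1+\sum_{k\le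 i}y_kx_k)$. In both algebras put $z_i=1+\sum_{k=1}^iy_kx_k$ and $\mathcal M_n=\{z_1,z_2,y_2,x_2,z_3,y_3,x_3,\dots,z_n,y_n,x_n\}$. Call $T\subseteq\mathcal M_n$ admissible if for every $2\le i\le n$: ($y_i\in T$ or $x_i\in T$) if and only if ($z_i\in T$ and $z_{i-1}\in T$). Then: (1) for every prime ideal $P$ of $A_q$, $P\cap\mathcal M_n$ is admissible; (2) for every Poisson prime ideal $P$ of $A_1$, $P\cap\mathcal M_n$ is admissible.
   Context: A Poisson ideal $P$ of $A_1$ is an ideal with $\{P,A_1\}\subseteq P$; it is Poisson prime if for Poisson ideals $I,J$, $IJ\subseteq P$ implies $I\subseteq P$ or $J\subseteq P$. ($A_1$ coincides with the semiclassical limit $A/(t-1)A$ of a one-parameter deformation whose specialization is $A_q$.) *)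

(* Defs.v *)
From Stdlib Require Reals.
From mathcomp Require Import all_boot all_algebra.
From mathcomp Require Import Rstruct complex.
From mathcomp Require Import mpoly.
Set Implicit Arguments. Unset Strict Implicit. Unset Printing Implicit Defensive.
Import GRing.Theory Num.Theory.
Local Open Scope ring_scope.

Definition Cc : fieldType := (Rdefinitions.R)[i].

(* g lies in the subgroup of C^x generated by q_1..q_n and the lambda_ij
   (C^x is abelian, so the generated subgroup is the set of such products). *)
Definition inG (n : nat) (q : nat -> Cc) (lam : nat -> nat -> Cc) (g : Cc) : Prop :=
  exists (a : nat -> int) (b : nat -> nat -> int),
    g = (\prod_(1 <= i < n.+1) q i ^ a i) *
        \prod_(1 <= i < n.+1) \prod_(1 <= j < n.+1) lam i j ^ b i j.

Definition torsion_freeG n q lam : Prop :=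
  forall (g : Cc) (m : nat), inG n q lam g -> (0 < m)%N -> g ^+ m = 1 -> g = 1.

Definition is_basisG n q lam (r : nat) (eta : 'I_r -> Cc) : Prop :=
  (forall k, inG n q lam (eta k)) /\
  (forall g, inG n q lam g ->
     exists! s : {ffun 'I_r -> int}, g = \prod_(k < r) eta k ^ s k).

Definition Qlin_indep (r : nat) (mu : 'I_r -> Cc) : Prop :=
  forall c : {ffun 'I_r -> rat},
    \sum_(k < r) ratr (c k) * mu k = 0 -> forall k, c k = 0.

(* d(eta_1^s_1 ... eta_r^s_r) = sum_i s_i mu_i  (d only matters on G) *)
Definition d_spec (r : nat) (eta mu : 'I_r -> Cc) (d : Cc -> Cc) : Prop :=
  forall s : {ffun 'I_r -> int},
    d (\prod_(k < r) eta k ^ s k) = \sum_(k < r) (s k)%:~R * mu k.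

Definition is_ideal (A : pzRingType) (I : A -> Prop) : Prop :=
  I 0 /\ (forall a b, I a -> I b -> I (a + b)) /\
  (forall a b, I b -> I (a * b) /\ I (b * a)).

(* I J subset P, i.e. all products a*b (a in I, b in J) lie in P *)
Definition prod_sub (A : pzRingType) (I J P : A -> Prop) : Prop :=
  forall a b, I a -> J b -> P (a * b).

Definition prime_ideal (A : pzRingType) (P : A -> Prop) : Prop :=
  is_ideal P /\ ~ P 1 /\
  forall I J, is_ideal I -> is_ideal J -> prod_sub I J P ->
    (forall a, I a -> P a) \/ (forall a, J a -> P a).

Definition relsq (n : nat) (q : nat -> Cc) (lam : nat -> nat -> Cc)
  (B : algType Cc) (y x : nat -> B) : Prop :=
  (forall i j, (1 <= i)%N -> (i < j)%N -> (j <= n)%N ->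
     [/\ y j * y i = lam j i *: (y i * y j),
         y j * x i = lam i j *: (x i * y j),
         x j * y i = (q i * lam i j) *: (y i * x j) &
         x j * x i = ((q i)^-1 * (lam i j)^-1) *: (x i * x j)]) /\
  (forall i, (1 <= i <= n)%N ->
     x i * y i - q i *: (y i * x i) =
     (q i - 1) *: (1 + \sum_(1 <= k < i) y k * x k)).

Definition alg_morph (B C : algType Cc) (f : B -> C) : Prop :=
  [/\ forall a b, f (a + b) = f a + f b,
      forall a b, f (a * b) = f a * f b,
      f 1 = 1 &
      forall (c : Cc) a, f (c *: a) = c *: f a].

(* (B; y, x) is the C-algebra presented by generators y_i, x_i (1 <= i <= n)
   and the relations relsq: the relations hold, and it has the universal
   property of the presented algebra. *)
Definition is_Aq (n : nat) (q : nat -> Cc) (lam : nat -> nat -> Cc)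
  (B : algType Cc) (y x : nat -> B) : Prop :=
  relsq n q lam y x /\
  forall (C : algType Cc) (y' x' : nat -> C), relsq n q lam y' x' ->
    (exists f : B -> C, alg_morph f /\
        forall i, (1 <= i <= n)%N -> f (y i) = y' i /\ f (x i) = x' i) /\
    (forall f g : B -> C, alg_morph f -> alg_morph g ->
        (forall i, (1 <= i <= n)%N -> f (y i) = g (y i) /\ f (x i) = g (x i)) ->
        forall b, f b = g b).

Definition zgen (B : pzRingType) (y x : nat -> B) (i : nat) : B :=
  1 + \sum_(1 <= k < i.+1) y k * x k.

Definition admissible (B : Type) (n : nat) (P : B -> Prop) (y x z : nat -> B) : Prop :=
  forall i, (2 <= i <= n)%N ->
    ((P (y i) \/ P (x i)) <-> (P (z i) /\ P (z i.-1))).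

(* Variables: y_i is 'X_(2(i-1)), x_i is 'X_(2(i-1)+1), for 1 <= i <= n. *)

Definition var1 (n k : nat) : {mpoly Cc[n.*2]} :=
  if @insub _ (fun m => (m < n.*2)%N) 'I_(n.*2) k is Some a then 'X_a else 0.
Arguments var1 : clear implicits.

Definition Y1 (n i : nat) : {mpoly Cc[n.*2]} := var1 n (i.-1).*2.
Definition X1 (n i : nat) : {mpoly Cc[n.*2]} := var1 n (i.-1).*2.+1.
Arguments Y1 : clear implicits.
Arguments X1 : clear implicits.

(* bracket of generators for i < j:  {g_j, g_i}, where kind false = y,
   true = x *)
Definition brlt (n : nat) (d : Cc -> Cc) (q : nat -> Cc) (lam : nat -> nat -> Cc)
  (j : nat) (kj : bool) (i : nat) (ki : bool) : {mpoly Cc[n.*2]} :=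
  match kj, ki with
  | false, false => d (lam j i) *: (Y1 n i * Y1 n j)
  | false, true  => d (lam i j) *: (X1 n i * Y1 n j)
  | true, false  => (d (q i) + d (lam i j)) *: (Y1 n i * X1 n j)
  | true, true   => - ((d (q i) + d (lam i j)) *: (X1 n i * X1 n j))
  end.
Arguments brlt : clear implicits.

Definition brgen (n : nat) (d : Cc -> Cc) (q : nat -> Cc) (lam : nat -> nat -> Cc)
  (j : nat) (kj : bool) (i : nat) (ki : bool) : {mpoly Cc[n.*2]} :=
  if (i < j)%N then brlt n d q lam j kj i ki
  else if (j < i)%N then - brlt n d q lam i ki j kj
  else
    match kj, ki with
    | true, false => d (q i) *: zgen (Y1 n) (X1 n) i
    | false, true => - (d (q i) *: zgen (Y1 n) (X1 n) i)
    | _, _ => 0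
    end.
Arguments brgen : clear implicits.

(* the Poisson bracket: the biderivation extending brgen *)
Definition pbr (n : nat) (d : Cc -> Cc) (q : nat -> Cc) (lam : nat -> nat -> Cc)
  (f g : {mpoly Cc[n.*2]}) : {mpoly Cc[n.*2]} :=
  \sum_(a < n.*2) \sum_(b < n.*2)
     (mderiv a f * mderiv b g) * brgen n d q lam (a./2).+1 (odd a) (b./2).+1 (odd b).
Arguments pbr : clear implicits.

Definition poisson_ideal n d q lam (P : {mpoly Cc[n.*2]} -> Prop) : Prop :=
  is_ideal P /\ forall a b, P a -> P (pbr n d q lam a b).
Arguments poisson_ideal : clear implicits.

Definition poisson_prime n d q lam (P : {mpoly Cc[n.*2]} -> Prop) : Prop :=
  poisson_ideal n d q lam P /\
  forall I J, poisson_ideal n d q lam I -> poisson_ideal n d q lam J ->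
    prod_sub I J P -> (forall a, I a -> P a) \/ (forall a, J a -> P a).

Arguments poisson_prime : clear implicits.

(* Main.v *)
From HB Require Import structures.
Require Import Defs.
From mathcomp Require Import all_boot all_algebra.
From mathcomp Require Import Rstruct complex.
From mathcomp Require Import mpoly.
From Stdlib Require Import ClassicalEpsilon.
Import GRing.Theory Num.Theory.
Local Open Scope ring_scope.

Section Sub.
Variables (B : algType Cc) (S : pred B) (hS : GRing.subsemialg_closed S).
Definition TT := {x : B | S x}.
HB.instance Definition _ := [isSub for (@sval B S) : TT -> B].
HB.instance Definition _ := [Choice of TT by <:].
HB.instance Definition _ := GRing.SubChoice_isSubAlgebra.Build _ _ _ TT hS.

Lemma valM (a b : TT) : sval (a * b) = sval a * sval b.
Proof. change (val (a * b) = val a * val b); by rewrite rmorphM. Qed.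
Lemma valZ c (a : TT) : sval (c *: a) = c *: sval a.
Proof. change (val (c *: a) = c *: val a); by rewrite linearZ. Qed.
Lemma valD (a b : TT) : sval (a + b) = sval a + sval b.
Proof. change (val (a + b) = val a + val b); by rewrite raddfD. Qed.
Lemma valB (a b : TT) : sval (a - b) = sval a - sval b.
Proof. change (val (a - b) = val a - val b); by rewrite raddfB. Qed.
Lemma val1 : sval (1 : TT) = 1.
Proof. change (val (1 : TT) = 1); by rewrite rmorph1. Qed.
Lemma val_sum m k (F : nat -> TT) : sval (\sum_(m <= j < k) F j) = \sum_(m <= j < k) sval (F j).
Proof. change (val (\sum_(m <= j < k) F j) = \sum_(m <= j < k) val (F j)); by rewrite raddf_sum. Qed.
Lemma val_inj' (a b : TT) : sval a = sval b -> a = b.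
Proof. exact: val_inj. Qed.

Lemma gen_sub n q lam (y x : nat -> B) : is_Aq n q lam y x ->
  (forall i, (1 <= i <= n)%N -> S (y i) /\ S (x i)) -> forall b, S b.
Proof.
move=> [[hR1 hR2] hU] hyx.
have [y' vy] : exists y' : nat -> TT, forall k, (1 <= k <= n)%N -> sval (y' k) = y k.
  exists (fun k => insubd (0 : TT) (y k)) => k hk.
  by rewrite insubdK //; case: (hyx k hk).
have [x' vx] : exists x' : nat -> TT, forall k, (1 <= k <= n)%N -> sval (x' k) = x k.
  exists (fun k => insubd (0 : TT) (x k)) => k hk.
  by rewrite insubdK //; case: (hyx k hk).
have hrel : relsq n q lam y' x'.
  split.
    move=> i j hi hij hj.
    have hi' : (1 <= i <= n)%N by rewrite hi /= (leq_trans (ltnW hij) hj).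
    have hj' : (1 <= j <= n)%N by rewrite hj andbT (leq_trans hi (ltnW hij)).
    have [e1 e2 e3 e4] := hR1 i j hi hij hj.
    split; apply: val_inj'; rewrite !valZ !valM ?(vy i hi') ?(vy j hj') ?(vx i hi') ?(vx j hj') //.
  move=> i hi.
  have hs : sval (\sum_(1 <= k < i) y' k * x' k) = \sum_(1 <= k < i) y k * x k.
    rewrite val_sum !big_nat; apply: eq_bigr => k /andP [hk1 hk2].
    have hk : (1 <= k <= n)%N by rewrite hk1 (leq_trans (ltnW hk2)); case/andP: hi.
    by rewrite valM vy // vx.
  apply: val_inj'.
  rewrite valB !valZ valD hs val1 !valM vy // vx //.
  exact: hR2.
case: (hU TT y' x' hrel) => [[f [hf hfg]] _].
have [_ hU2] := (hU B y x (conj hR1 hR2)).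
have hvf : alg_morph (fun b => sval (f b)).
  case: hf => h1 h2 h3 h4; split.
  - by move=> a b; rewrite h1 valD.
  - by move=> a b; rewrite h2 valM.
  - by rewrite h3 val1.
  - by move=> c a; rewrite h4 valZ.
have hid : alg_morph (fun b : B => b) by [].
move=> b.
have hb : sval (f b) = b.
  apply: (hU2 _ _ hvf hid) => i hi; case: (hfg i hi) => -> ->.
  by rewrite (vy i hi) (vx i hi).
rewrite -hb; exact: (proj2_sig (f b)).
Qed.
End Sub.

Set Implicit Arguments. Unset Strict Implicit.
Lemma mderivXU (m : nat) (a u : 'I_m) :
  mderiv a ('X_u : {mpoly Cc[m]}) = (u == a)%:R.
Proof.
rewrite mderivX mnm1E; case: eqP => [->|_]; last by rewrite scale0r.
have -> : (U_(a) - U_(a))%MM = 0%MM.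
  by apply/mnmP => j; rewrite mnmBE subnn mnm0E.
by rewrite mpolyX0 scale1r.
Qed.

Lemma var1E n k (hk : (k < n.*2)%N) : var1 n k = 'X_(Ordinal hk).
Proof. by rewrite /var1 insubT. Qed.

Section P.
Variables (n : nat) (d : Cc -> Cc) (q : nat -> Cc) (lam : nat -> nat -> Cc).
Local Notation pb := (pbr n d q lam).

Lemma pbrD1 f g h : pb (f + g) h = pb f h + pb g h.
Proof.
rewrite /pbr -big_split; apply: eq_bigr => a _.
rewrite -big_split; apply: eq_bigr => b _.
by rewrite mderivD !mulrDl.
Qed.

Lemma pbrM1 f g h : pb (f * g) h = f * pb g h + g * pb f h.
Proof.
rewrite /pbr !mulr_sumr -big_split; apply: eq_bigr => a _.
rewrite !mulr_sumr -big_split; apply: eq_bigr => b _.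
rewrite mderivM !mulrDl addrC !mulrA; congr (_ + _); by rewrite [_ * g]mulrC.
Qed.
End P.

Section Ideal.
Variable (A : algType Cc) (P : A -> Prop) (hP : is_ideal P).
Lemma id0 : P 0. Proof. by case: hP. Qed.
Lemma idD a b : P a -> P b -> P (a + b). Proof. by case: hP => _ [h _]; apply: h. Qed.
Lemma idMl a b : P b -> P (a * b). Proof. by case: hP => _ [_ h] hb; case: (h a b hb). Qed.
Lemma idMr a b : P b -> P (b * a). Proof. by case: hP => _ [_ h] hb; case: (h a b hb). Qed.
Lemma idZ c b : P b -> P (c *: b). Proof. by move=> hb; rewrite -mulr_algl; apply: idMl. Qed.
Lemma idN b : P b -> P (- b). Proof. by move=> hb; rewrite -scaleN1r; apply: idZ. Qed.
Lemma idB a b : P a -> P b -> P (a - b). Proof. by move=> ha hb; apply: idD => //; apply: idN. Qed.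
Lemma idZinv c b : c != 0 -> P (c *: b) -> P b.
Proof. by move=> hc hb; rewrite -[b]scale1r -(mulVf hc) -scalerA; apply: idZ. Qed.
End Ideal.

Lemma zsplit (B : pzRingType) (y x : nat -> B) i : (0 < i)%N ->
  zgen y x i = zgen y x i.-1 + y i * x i.
Proof.
move=> hi; rewrite /zgen (prednK hi) big_nat_recr //= addrA //.
Qed.

Lemma YE n i : (1 <= i <= n)%N ->
  exists u : 'I_(n.*2), Y1 n i = 'X_u /\ (u./2).+1 = i /\ odd u = false.
Proof.
case/andP=> h1 h2.
have hu : ((i.-1).*2 < n.*2)%N by rewrite ltn_double prednK.
exists (Ordinal hu); rewrite /Y1 (@var1E n _ hu) /= doubleK prednK // odd_double.
by [].
Qed.

Lemma XE n i : (1 <= i <= n)%N ->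
  exists u : 'I_(n.*2), X1 n i = 'X_u /\ (u./2).+1 = i /\ odd u = true.
Proof.
case/andP=> h1 h2.
have hu : ((i.-1).*2.+1 < n.*2)%N.
  by rewrite -doubleS leq_double prednK.
exists (Ordinal hu); rewrite /X1 (@var1E n _ hu) /= uphalf_double prednK // odd_double.
by [].
Qed.

Section P2.
Variables (n : nat) (d : Cc -> Cc) (q : nat -> Cc) (lam : nat -> nat -> Cc).
Local Notation pb := (pbr n d q lam).
Local Notation G a b := (brgen n d q lam (nat_of_ord a)./2.+1 (odd a) (nat_of_ord b)./2.+1 (odd b)).

Lemma sum1 m (F : 'I_m -> {mpoly Cc[n.*2]}) u :
  (forall a, a != u -> F a = 0) -> \sum_a F a = F u.
Proof. by move=> h; rewrite (bigD1 u) //= big1 ?addr0 // => a /h. Qed.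

Lemma pbrXX (u v : 'I_(n.*2)) : pb 'X_u 'X_v = G u v.
Proof.
rewrite /pbr (bigD1 u) //= addrC big1 ?add0r => [|a hau]; last first.
  by apply: big1 => b _; rewrite mderivXU eq_sym (negbTE hau) mul0r mul0r.
rewrite (bigD1 v) //= addrC big1 ?add0r => [|b hbv]; last first.
  by rewrite !mderivXU eq_sym (negbTE hbv) mulr0 mul0r.
by rewrite !mderivXU !eqxx mul1r mul1r.
Qed.

Lemma pbrX_mem (Is : {mpoly Cc[n.*2]} -> Prop) (u : 'I_(n.*2)) h :
  Is 0 -> (forall a b, Is a -> Is b -> Is (a + b)) ->
  (forall a b, Is a -> Is (b * a)) ->
  (forall b : 'I_(n.*2), Is (G u b)) -> Is (pb 'X_u h).
Proof.
move=> h0 hD hM hG; rewrite /pbr.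
apply: (big_ind Is) => // a _; apply: (big_ind Is) => // b _.
rewrite mderivXU; case: eqP => [<-|_]; first exact: hM.
by rewrite mul0r mul0r.
Qed.
End P2.

Section BrMem.
Variables (n : nat) (d : Cc -> Cc) (q : nat -> Cc) (lam : nat -> nat -> Cc) (i : nat).
Variable Is : {mpoly Cc[n.*2]} -> Prop.
Hypotheses (hMr : forall a b, Is a -> Is (a * b)) (hMl : forall a b, Is a -> Is (b * a))
  (hZ : forall c a, Is a -> Is (c *: a)) (hN : forall a, Is a -> Is (- a)) (h0 : Is 0)
  (hz : Is (zgen (Y1 n) (X1 n) i)).

Ltac solv g := repeat (first [ exact h0 | exact hz | apply: hN | apply: hZ
   | (apply: hMl; exact g) | (apply: hMr; exact g) ]).

Lemma brgen_memY : Is (Y1 n i) -> forall j k, Is (brgen n d q lam i false j k).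
Proof.
move=> hg j k; rewrite /brgen.
case: ltnP => h1; first by case: k; rewrite /brlt; solv hg.
case: ltnP => h2; first by case: k; rewrite /brlt; solv hg.
have -> : j = i by apply/eqP; rewrite eqn_leq h1 h2.
by case: k; solv hg.
Qed.

Lemma brgen_memX : Is (X1 n i) -> forall j k, Is (brgen n d q lam i true j k).
Proof.
move=> hg j k; rewrite /brgen.
case: ltnP => h1; first by case: k; rewrite /brlt; solv hg.
case: ltnP => h2; first by case: k; rewrite /brlt; solv hg.
have -> : j = i by apply/eqP; rewrite eqn_leq h1 h2.
by case: k; solv hg.
Qed.
End BrMem.

Section IgS.
Variables (A : comAlgType Cc) (P : A -> Prop) (hP : is_ideal P) (g : A).
Definition Ig (a : A) := exists c, P (a - c * g).
Lemma Ig_g : Ig g. Proof. by exists 1; rewrite mul1r subrr; apply: id0. Qed.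
Lemma Ig_P a : P a -> Ig a. Proof. by exists 0; rewrite mul0r subr0. Qed.
Lemma Ig0 : Ig 0. Proof. by apply: Ig_P; apply: id0. Qed.
Lemma IgD a b : Ig a -> Ig b -> Ig (a + b).
Proof.
move=> [c1 h1] [c2 h2]; exists (c1 + c2).
have -> : a + b - (c1 + c2) * g = (a - c1 * g) + (b - c2 * g).
  by rewrite mulrDl opprD addrACA.
exact: idD.
Qed.
Lemma IgMr a b : Ig a -> Ig (a * b).
Proof.
move=> [c h]; exists (c * b).
have -> : a * b - c * b * g = (a - c * g) * b.
  by rewrite mulrBl -!mulrA [b * g]mulrC.
exact: idMr.
Qed.
Lemma IgMl a b : Ig a -> Ig (b * a).
Proof. by rewrite mulrC; apply: IgMr. Qed.
Lemma IgZ c a : Ig a -> Ig (c *: a).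
Proof. by move=> h; rewrite -mulr_algl; apply: IgMl. Qed.
Lemma IgN a : Ig a -> Ig (- a).
Proof. by move=> h; rewrite -scaleN1r; apply: IgZ. Qed.
Lemma IgI : is_ideal Ig.
Proof. split; first exact: Ig0. split; first exact: IgD.
by move=> a b h; split; [apply: IgMl | apply: IgMr]. Qed.
End IgS.

Lemma part2 n d q lam (hdq : forall i, (1 <= i <= n)%N -> d (q i) != 0)
  (P : {mpoly Cc[n.*2]} -> Prop) :
  poisson_prime n d q lam P -> admissible n P (Y1 n) (X1 n) (zgen (Y1 n) (X1 n)).
Proof.
move=> [[hPi hPb] hPp] i /andP [hi2 hin].
have hi0 : (0 < i)%N by apply: leq_trans hi2.
have hi1 : (1 <= i <= n)%N by rewrite hi0.
have hz := zsplit (Y1 n) (X1 n) hi0.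
have [u [hYu [hu1 hu2]]] := YE hi1.
have [v [hXv [hv1 hv2]]] := XE hi1.
set Z := zgen (Y1 n) (X1 n).
have hdi := hdq i hi1.
split.
- have fin : P (Z i) -> P (Y1 n i * X1 n i) -> P (Z i) /\ P (Z i.-1).
    move=> h1 h2; split => //.
    have -> : Z i.-1 = Z i - Y1 n i * X1 n i by rewrite /Z hz addrK.
    exact: idB.
  case=> h.
  + have : P (pbr n d q lam (Y1 n i) (X1 n i)) by apply: hPb.
    rewrite hYu hXv pbrXX hu1 hu2 hv1 hv2 /brgen ltnn => hp.
    apply: fin; last by apply: idMr.
    by apply: (idZinv hPi hdi); rewrite -[_ *: _]opprK; apply: idN.
  + have : P (pbr n d q lam (X1 n i) (Y1 n i)) by apply: hPb.
    rewrite hYu hXv pbrXX hu1 hu2 hv1 hv2 /brgen ltnn => hp.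
    apply: fin; last by apply: idMl.
    exact: (idZinv hPi hdi).
- case=> hzi hzim.
  have hYX : P (Y1 n i * X1 n i).
    have -> : Y1 n i * X1 n i = Z i - Z i.-1 by rewrite /Z hz addrC addKr.
    exact: idB.
  have pI : forall (g : {mpoly Cc[n.*2]}) (w : 'I_(n.*2)) (b : bool),
      g = 'X_w -> (w./2).+1 = i -> odd w = b -> g = (if b then X1 n i else Y1 n i) ->
      poisson_ideal n d q lam (Ig P g).
    move=> g w b hg hw1 hw2 hgb; split; first exact: IgI.
    move=> a h [c hc].
    have -> : a = (a - c * g) + c * g by rewrite subrK.
    rewrite pbrD1 pbrM1.
    apply: IgD => //; first by apply: Ig_P; apply: hPb.
    apply: IgD => //; last by apply: IgMr => //; apply: Ig_g.
    apply: IgMl => //; rewrite hg.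
    apply: pbrX_mem; [exact: Ig0 | by move=> *; apply: IgD | by move=> *; apply: IgMl |].
    move=> b'; rewrite hw1 hw2 -hg.
    case: b hw2 hgb => hw2 hgb.
    + apply: brgen_memX.
      * by move=> *; apply: IgMr.
      * by move=> *; apply: IgMl.
      * by move=> *; apply: IgZ.
      * by move=> *; apply: IgN.
      * exact: Ig0.
      * exact: Ig_P.
      * by rewrite {1}hgb; apply: Ig_g.
    + apply: brgen_memY.
      * by move=> *; apply: IgMr.
      * by move=> *; apply: IgMl.
      * by move=> *; apply: IgZ.
      * by move=> *; apply: IgN.
      * exact: Ig0.
      * exact: Ig_P.
      * by rewrite {1}hgb; apply: Ig_g.
  have hprod : prod_sub (Ig P (Y1 n i)) (Ig P (X1 n i)) P.
    move=> a b [c1 h1] [c2 h2].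
    have -> : a * b = (a - c1 * Y1 n i) * b + (c1 * Y1 n i) * (b - c2 * X1 n i)
                      + (c1 * c2) * (Y1 n i * X1 n i).
      have e : c1 * Y1 n i * (c2 * X1 n i) = c1 * c2 * (Y1 n i * X1 n i) by rewrite mulrACA.
      by rewrite mulrBl mulrBr e addrA !subrK.
    apply: idD => //; first apply: idD => //.
    - exact: idMr.
    - exact: idMl.
    - exact: idMl.
  case: (hPp _ _ (pI _ u false hYu hu1 hu2 erefl) (pI _ v true hXv hv1 hv2 erefl) hprod) => h.
  + by left; apply: h; apply: Ig_g.
  + by right; apply: h; apply: Ig_g.
Qed.

Definition asb (Q : Prop) : bool := if excluded_middle_informative Q then true else false.
Lemma asbP (Q : Prop) : asb Q <-> Q.
Proof. by rewrite /asb; case: excluded_middle_informative. Qed.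

Lemma gen_all n q lam (B : algType Cc) (y x : nat -> B) : is_Aq n q lam y x ->
  forall S : B -> Prop, S 1 -> S 0 -> (forall a b, S a -> S b -> S (a + b)) ->
  (forall a b, S a -> S b -> S (a * b)) -> (forall c a, S a -> S (c *: a)) ->
  (forall i, (1 <= i <= n)%N -> S (y i) /\ S (x i)) -> forall b, S b.
Proof.
move=> hA S h1 h0 hD hM hZ hg b.
pose Sb : pred B := fun b => asb (S b).
have hS : GRing.subsemialg_closed Sb.
  split; rewrite ?unfold_in /Sb.
  - by apply/asbP.
  - split; rewrite ?unfold_in /Sb; first by apply/asbP.
    by move=> u v; rewrite !unfold_in => /asbP hu /asbP hv; apply/asbP; apply: hD.
  - by move=> c u; rewrite !unfold_in => /asbP hu; apply/asbP; apply: hZ.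
  - by move=> u v; rewrite !unfold_in => /asbP hu /asbP hv; apply/asbP; apply: hM.
apply/asbP; apply: (@gen_sub B Sb hS n q lam y x hA) => i hi.
by case: (hg i hi) => ? ?; split; apply/asbP.
Qed.

Lemma part1 n q lam (hq : forall i, (1 <= i <= n)%N -> q i != 0 /\ q i != 1)
  (hl : forall i j, (1 <= i <= n)%N -> (1 <= j <= n)%N -> lam i j != 0)
  (B : algType Cc) (y x : nat -> B) (hA : is_Aq n q lam y x)
  (P : B -> Prop) : prime_ideal P -> admissible n P y x (zgen y x).
Proof.
move: (hA) => [[hR1 hR2] _] [hPi [hP1 hPp]] i /andP [hi2 hin].
have hi0 : (0 < i)%N by apply: leq_trans hi2.
have hi1 : (1 <= i <= n)%N by rewrite hi0.
have hz := zsplit y x hi0.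
have hrel : x i * y i - q i *: (y i * x i) = (q i - 1) *: zgen y x i.-1.
  by rewrite hR2 // /zgen (prednK hi0).
have [hq0 hq1] := hq i hi1.
have hq1' : q i - 1 != 0 by rewrite subr_eq0.
split.
- have fin : P (zgen y x i.-1) -> P (y i * x i) -> P (zgen y x i) /\ P (zgen y x i.-1).
    by move=> h1 h2; split => //; rewrite hz; apply: idD.
  case=> h.
  + have hyx : P (y i * x i) by apply: idMr.
    have hxy : P (x i * y i) by apply: idMl.
    have : P ((q i - 1) *: zgen y x i.-1) by rewrite -hrel; apply: idB => //; apply: idZ.
    by move/(idZinv hPi hq1') => hzim; apply: fin.
  + have hyx : P (y i * x i) by apply: idMl.
    have hxy : P (x i * y i) by apply: idMr.
    have : P ((q i - 1) *: zgen y x i.-1) by rewrite -hrel; apply: idB => //; apply: idZ.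
    by move/(idZinv hPi hq1') => hzim; apply: fin.
- case=> hzi hzim.
  have hyx : P (y i * x i).
    have -> : y i * x i = zgen y x i - zgen y x i.-1 by rewrite hz addrC addKr.
    exact: idB.
  have ex : x i * y i = q i *: (y i * x i) + (q i - 1) *: zgen y x i.-1.
    by rewrite -hrel addrC subrK.
  have norm : forall w, exists w', P (y i * w - w' * y i).
    apply: (gen_all hA).
    - by exists 1; rewrite mulr1 mul1r subrr; apply: id0.
    - by exists 0; rewrite mulr0 mul0r subrr; apply: id0.
    - move=> a b [a' ha] [b' hb]; exists (a' + b').
      have -> : y i * (a + b) - (a' + b') * y i = (y i * a - a' * y i) + (y i * b - b' * y i).
        by rewrite mulrDr mulrDl opprD addrACA.
      exact: idD.
    - move=> a b [a' ha] [b' hb]; exists (a' * b').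
      have -> : y i * (a * b) - a' * b' * y i = (y i * a - a' * y i) * b + a' * (y i * b - b' * y i).
        by rewrite mulrBl mulrBr !mulrA addrA subrK.
      by apply: idD => //; [apply: idMr | apply: idMl].
    - move=> c a [a' ha]; exists (c *: a').
      have -> : y i * (c *: a) - c *: a' * y i = c *: (y i * a - a' * y i).
        by rewrite -scalerAl -scalerAr scalerBr.
      exact: idZ.
    - move=> j hj; have [hj1 hjn] := andP hj.
      case: (ltngtP j i) => hji.
      + have [e1 e2 _ _] := hR1 j i hj1 hji hin.
        split; [exists (lam i j *: y j) | exists (lam j i *: x j)].
        * by rewrite e1 -scalerAl subrr; apply: id0.
        * by rewrite e2 -scalerAl subrr; apply: id0.
      + have [e1 _ e3 _] := hR1 i j hi0 hji hjn.
        have hl1 : lam j i != 0 by apply: hl.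
        have hl2 : q i * lam i j != 0 by rewrite mulf_neq0 //; apply: hl.
        split; [exists ((lam j i)^-1 *: y j) | exists ((q i * lam i j)^-1 *: x j)].
        * by rewrite -scalerAl e1 scalerA mulVf // scale1r subrr; apply: id0.
        * by rewrite -scalerAl e3 scalerA mulVf // scale1r subrr; apply: id0.
      + subst j; split; first by exists (y i); rewrite subrr; apply: id0.
        exists ((q i)^-1 *: x i).
        rewrite -scalerAl ex scalerDr scalerA mulVf // scale1r opprD addrA subrr add0r.
        by apply: (idN hPi); apply: (idZ hPi); apply: (idZ hPi).
  pose I := fun a => forall w, P (a * w * x i).
  pose J := fun b => forall a, I a -> forall w, P (a * w * b).
  have hI : is_ideal I.
    split; first by move=> w; rewrite !mul0r; apply: id0.
    split; first by move=> a b ha hb w; rewrite !mulrDl; apply: idD.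
    move=> a b hb; split => w.
    - by rewrite -!mulrA; apply: (idMl hPi); rewrite !mulrA; apply: hb.
    - by rewrite -(mulrA b a w); apply: hb.
  have hJ : is_ideal J.
    split; first by move=> a _ w; rewrite mulr0; apply: (id0 hPi).
    split; first by move=> a b ha hb a' ha' w; rewrite mulrDr; apply: (idD hPi); [apply: ha | apply: hb].
    move=> a b hb; split => a' ha' w.
    - by rewrite mulrA -(mulrA a'); apply: hb.
    - by rewrite mulrA; apply: (idMr hPi); apply: hb.
  have hIJ : prod_sub I J P.
    by move=> a b ha hb; rewrite -[a]mulr1; apply: hb.
  case: (hPp I J hI hJ hIJ) => h.
  + left; apply: h => w; have [w' hw] := norm w.
    have -> : y i * w * x i = (y i * w - w' * y i) * x i + w' * (y i * x i).
      by rewrite mulrBl -!mulrA subrK.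
    by apply: (idD hPi); [apply: (idMr hPi) | apply: (idMl hPi)].
  + by right; apply: h => a ha w; apply: ha.
Qed.

Lemma dq_neq0 n q lam r (eta mu : 'I_r -> Cc) d :
  (forall i, (1 <= i <= n)%N -> q i != 1) -> is_basisG n q lam eta ->
  Qlin_indep mu -> d_spec eta mu d -> forall i, (1 <= i <= n)%N -> d (q i) != 0.
Proof.
move=> hq [_ hB] hQ hd i hi.
have hG : inG n q lam (q i).
  exists (fun k => (k == i)%:Z), (fun _ _ => 0).
  rewrite [X in _ * X]big1 ?mulr1; last by move=> k _; apply: big1 => l _; rewrite expr0z.
  have hii : i \in index_iota 1 n.+1 by rewrite mem_index_iota ltnS.
  rewrite (bigD1_seq i) //=; last by rewrite /index_iota iota_uniq.
  rewrite eqxx expr1z big1_seq ?mulr1 // => k /andP [hk _].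
  by rewrite (negbTE hk) expr0z.
have [s [hs _]] := hB _ hG.
apply/negP => /eqP hd0.
have hs0 : forall k, s k = 0.
  have := hQ [ffun k => (s k)%:~R : rat].
  move=> hQ' k; have := hQ' _ k; rewrite ffunE => h.
  apply/eqP; rewrite -(intr_eq0 rat) h //.
  apply: etrans hd0; rewrite [in RHS]hs hd; apply: eq_bigr => l _; by rewrite ffunE ratr_int.
move: (hq i hi); rewrite hs.
by rewrite big1 ?eqxx // => k _; rewrite hs0 expr0z.
Qed.

Unset Implicit Arguments.

Theorem lemma2p14 (n : nat) (q : nat -> Cc) (lam : nat -> nat -> Cc)
  (r : nat) (eta mu : 'I_r -> Cc) (d : Cc -> Cc) :
  (forall i, (1 <= i <= n)%N -> q i != 0 /\ q i != 1) ->
  (forall i j, (1 <= i <= n)%N -> (1 <= j <= n)%N -> lam i j != 0) ->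
  (forall i, (1 <= i <= n)%N -> lam i i = 1) ->
  (forall i j, (1 <= i <= n)%N -> (1 <= j <= n)%N -> lam i j = (lam j i)^-1) ->
  torsion_freeG n q lam ->
  is_basisG n q lam eta ->
  Qlin_indep mu ->
  d_spec eta mu d ->
  (forall (B : algType Cc) (y x : nat -> B), is_Aq n q lam y x ->
     forall P : B -> Prop, prime_ideal P -> admissible n P y x (zgen y x)) /\
  (forall P : {mpoly Cc[n.*2]} -> Prop, poisson_prime n d q lam P ->
     admissible n P (Y1 n) (X1 n) (zgen (Y1 n) (X1 n))).
Proof.
move=> hq hl _ _ _ hB hQ hd; split.
- move=> B y x hA P hP; exact: (part1 hq hl hA hP).
- move=> P hP; apply: (part2 _ hP) => i hi.
  have hq' : forall k, (1 <= k <= n)%N -> q k != 1 by move=> k hk; case: (hq k hk).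
  exact: (@dq_neq0 n q lam r eta mu d hq' hB hQ hd i hi).
Qed.
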